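(* Let $G$ be a finite simple connected graph with minimum degree $\delta(G)\geq 3$. If $Z(G)=3$, then the edge connectivity of $G$ satisfies $\kappa'(G)\geq 3$.
   Context: Zero forcing: color each vertex of $G$ black or white. Color-change rule: if a black vertex $u$ has exactly one white neighbor $v$, then $v$ is recolored black ($u$ ''forces'' $v$). A set $Z\subseteq V(G)$ is a zero forcing set if, starting with exactly the vertices of $Z$ black and applying the color-change rule repeatedly until no more changes are possible, all vertices become black. The zero forcing number $Z(G)$ is the minimum size of a zero forcing set. $\kappa'(G)$ denotes the edge connectivity of $G$ (the minimum number of edges whose deletion disconnects $G$). *)

(* Defs.v *)
From mathcomp Require Import all_boot.
Set Implicit Arguments. Unset Strict Implicit. Unset Printing Implicit Defensive.

Section Graphs.
Variable T : finType.
Variable e : rel T.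

Definition simple_graph : Prop := symmetric e /\ irreflexive e.

Definition neighbours (v : T) : {set T} := [set u | e v u].
Definition deg (v : T) : nat := #|neighbours v|.

Definition min_deg_ge (k : nat) : Prop := forall v : T, k <= deg v.

Definition connected_graph (r : rel T) : Prop := forall x y : T, connect r x y.

(* one round of the colour-change rule, applied at every black vertex u
   having exactly one white neighbour *)
Definition force_step (B : {set T}) : {set T} :=
  B :|: [set v | [exists u, [&& u \in B, e u v, v \notin B &
                             neighbours u :\: B == [set v]]]].

(* final coloured set: iterate until stabilization (#|T| rounds suffice) *)
Definition zf_closure (Z : {set T}) : {set T} := iter #|T| force_step Z.

Definition zero_forcing_set (Z : {set T}) : bool := zf_closure Z == [set: T].

(* zero forcing number: minimum size of a zero forcing set
   ([set: T] is always one) *)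
Definition zero_forcing_number : nat :=
  #|[arg min_(Z < [set: T] | zero_forcing_set Z) #|Z|]|.

Definition edge_set : {set {set T}} :=
  [set E : {set T} | [exists x, exists y, e x y && (E == [set x; y])]].

Definition delete_edges (F : {set {set T}}) : rel T :=
  fun x y => e x y && ([set x; y] \notin F).

Definition disconnecting (F : {set {set T}}) : bool :=
  [exists x, exists y, ~~ connect (delete_edges F) x y].

(* edge connectivity: minimum number of edges whose deletion disconnects G
   (defaults to |E(G)| if no edge set disconnects, i.e. the one-vertex graph) *)
Definition edge_connectivity : nat :=
  \big[minn/#|edge_set|]_(F : {set {set T}} | (F \subset edge_set) && disconnecting F) #|F|.

End Graphs.

(* Main.v *)
Require Import Defs.
From mathcomp Require Import all_boot.
From mathcomp Require Import zify.
Set Implicit Arguments. Unset Strict Implicit. Unset Printing Implicit Defensive.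

Section Core.
Variables (T : finType) (e : rel T).
Hypotheses (esym : symmetric e) (eirr : irreflexive e).
Local Notation Nb := (neighbours e).
Hypothesis deg3 : forall v, 3 <= #|Nb v|.
Variables (t : T -> nat) (f : T -> T) (Z : {set T}).
Hypothesis P1 : forall v, v \notin Z -> e (f v) v.
Hypothesis P2 : forall v, v \notin Z -> t (f v) < t v.
Hypothesis P3 : forall v n, v \notin Z -> e (f v) n -> n != v -> t n < t v.
Hypothesis cardZ : #|Z| = 3.

Lemma NbE u v : (u \in Nb v) = e v u.
Proof. by rewrite /neighbours inE. Qed.

Lemma finj : {in ~: Z &, injective f}.
Proof.
move=> a b; rewrite !inE => aZ bZ fab; apply/eqP; apply/negPn/negP => nab.
have l1 : t b < t a by apply: P3 => //; [rewrite fab; exact: P1 | rewrite eq_sym].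
have l2 : t a < t b by apply: P3 => //; rewrite -fab; exact: P1.
lia.
Qed.

Definition Ent (A : {set T}) := [set n in A | (n \notin Z) && (f n \notin A)].
Definition Int (A : {set T}) := [set n in A | (n \notin Z) && (f n \in A)].
Definition Ext (A : {set T}) :=
  [set x in A | [exists y, [&& y \notin Z, f y == x & y \notin A]]].
Definition Fs := f @: ~: Z.
Definition Tm := ~: Fs.
Definition cutp (A : {set T}) :=
  [set p : T * T | [&& p.1 \in A, p.2 \notin A & e p.1 p.2]].
Definition cc (A : {set T}) v := #|Nb v :\: A|.
Definition sig (A : {set T}) := #|Z :&: A| + #|Ent A|.

Lemma inEnt A n : (n \in Ent A) = [&& n \in A, n \notin Z & f n \notin A].
Proof. by rewrite inE. Qed.
Lemma inInt A n : (n \in Int A) = [&& n \in A, n \notin Z & f n \in A].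
Proof. by rewrite inE. Qed.
Lemma inExt A x : (x \in Ext A) = (x \in A) && [exists y, [&& y \notin Z, f y == x & y \notin A]].
Proof. by rewrite inE. Qed.
Lemma incutp A p : (p \in cutp A) = [&& p.1 \in A, p.2 \notin A & e p.1 p.2].
Proof. by rewrite inE. Qed.

Lemma ExtE (A : {set T}) : Ext A = f @: Ent (~: A).
Proof.
apply/setP=> x; rewrite inE; apply/andP/imsetP.
  case=> xA /existsP[y /and3P[yZ /eqP fy yA]]; exists y => //.
  by rewrite !inE yA yZ fy xA.
case=> y; rewrite !inE => /and3P[yA yZ fyA] ->; split=> //.
  by rewrite negbK in fyA.
by apply/existsP; exists y; rewrite yZ eqxx yA.
Qed.

Lemma cardExt (A : {set T}) : #|Ext A| = #|Ent (~: A)|.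
Proof.
rewrite ExtE card_in_imset // => a b; rewrite !inE => /and3P[_ aZ _] /and3P[_ bZ _].
by apply: finj; rewrite inE.
Qed.

Lemma cardA (A : {set T}) : #|A| = #|Z :&: A| + #|Int A| + #|Ent A|.
Proof.
rewrite -addnA -(cardsID Z A) setIC; congr (_ + _).
rewrite -(cardsID [set n | f n \in A] (A :\: Z)); congr (_ + _); apply: eq_card => n;
by rewrite /Int /Ent !inE; case: (n \in A); case: (n \in Z); case: (f n \in A).
Qed.

Lemma cardA2 (A : {set T}) : #|A| = #|Tm :&: A| + #|Int A| + #|Ext A|.
Proof.
rewrite -addnA -(cardsID Tm A) setIC; congr (_ + _).
have -> : A :\: Tm = A :&: Fs by rewrite /Tm setDE setCK.
rewrite -(cardsID (f @: Int A) (A :&: Fs)); congr (_ + _).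
  have -> : #|Int A| = #|f @: Int A|.
    by rewrite card_in_imset // => a b; rewrite /Int !inE => /and3P[_ aZ _] /and3P[_ bZ _]; apply: finj; rewrite inE.
  apply: eq_card => x; rewrite inE andb_idl // => /imsetP[y]; rewrite inInt => /and3P[yA yZ fyA] ->.
  by rewrite inE fyA; apply/imsetP; exists y; rewrite ?inE.
apply: eq_card => x; rewrite inExt !inE; apply/idP/idP.
  case/and3P=> xI xA /imsetP[y]; rewrite inE => yZ xfy.
  rewrite xA /=; apply/existsP; exists y; rewrite yZ -xfy eqxx /=.
  apply/negP=> yA; case/negP: xI; apply/imsetP; exists y => //.
  by rewrite inInt yA yZ -xfy xA.
case/andP=> xA /existsP[y /and3P[yZ /eqP fy yA]].
have xF : x \in Fs by apply/imsetP; exists y; rewrite ?inE // fy.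
rewrite xA xF /= andbT.
apply/negP=> /imsetP[y']; rewrite inInt => /and3P[y'A y'Z _] xfy'.
have : y = y' by apply: finj; rewrite ?inE // fy.
by move=> eyy; move: yA; rewrite eyy y'A.
Qed.

Lemma ident (A : {set T}) : sig A = #|Tm :&: A| + #|Ext A|.
Proof. have := cardA A; rewrite cardA2 /sig; lia. Qed.


Lemma sum_cc (A : {set T}) : \sum_(a in A) cc A a = #|cutp A|.
Proof.
rewrite -sum1_card.
rewrite (eq_bigl (fun p : T * T => (p.1 \in A) && ((p.2 \notin A) && e p.1 p.2))); last first.
  by move=> p; rewrite incutp.
rewrite -(pair_big_dep (fun a => a \in A) (fun a b => (b \notin A) && e a b) (fun _ _ => 1)) /=.
apply: eq_bigr => a aA; rewrite /cc -sum1_card; apply: eq_bigl => b.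
by rewrite !inE.
Qed.

Lemma cc2 (A : {set T}) a b : a \in A -> b \in A -> a != b -> cc A a + cc A b <= #|cutp A|.
Proof.
move=> aA bA ab; rewrite -sum_cc (bigD1 a) //= (bigD1 b) /=; last by rewrite bA eq_sym.
by rewrite addnA leq_addr.
Qed.

Lemma cc3 (A : {set T}) a b c : a \in A -> b \in A -> c \in A -> a != b -> a != c -> b != c ->
  cc A a + cc A b + cc A c <= #|cutp A|.
Proof.
move=> aA bA cA ab ac bc; rewrite -sum_cc (bigD1 a) //= (bigD1 b) /=; last by rewrite bA eq_sym.
rewrite (bigD1 c) /=; last by rewrite cA eq_sym ac eq_sym bc.
by rewrite !addnA leq_addr.
Qed.

Lemma cc1 (A : {set T}) a : a \in A -> cc A a <= #|cutp A|.
Proof. by move=> aA; rewrite -sum_cc (bigD1 a) //= leq_addr. Qed.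

Lemma ge4 (A : {set T}) a : a \in A -> #|cutp A| <= 2 -> 4 <= #|A|.
Proof.
move=> aA cut2; rewrite leqNgt; apply/negP => small.
have hs : forall s, s \in A -> 4 - #|A| <= cc A s.
  move=> s sA.
  have sub : Nb s \subset (A :\ s) :|: (Nb s :\: A).
    apply/subsetP => u; rewrite !inE ?NbE => esu.
    case: (u \in A); rewrite /= ?andbT ?andbF ?orbF ?esu ?orbT //; apply/eqP => us; by rewrite us eirr in esu.
  have := subset_leq_card sub; rewrite cardsU (cardsD1 s A) sA /cc.
  have := deg3 s; lia.
have : \sum_(s in A) (4 - #|A|) <= #|cutp A|.
  by rewrite -sum_cc; apply: leq_sum => s sA; apply: hs.
rewrite sum_nat_const.
have : 0 < #|A| by apply/card_gt0P; exists a.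
move: small cut2; case: #|A| => [|[|[|[|n]]]] //= _ c2 _; lia.
Qed.

Lemma crossing (A : {set T}) : #|Ent A| + #|Ent (~: A)| <= #|cutp A|.
Proof.
set P := [set (n, f n) | n in Ent A].
set Q := [set (f y, y) | y in Ent (~: A)].
have cP : #|P| = #|Ent A| by apply: card_imset => a b [].
have cQ : #|Q| = #|Ent (~: A)| by apply: card_imset => a b [].
have dis : P :&: Q = set0.
  apply/setP => p; rewrite !inE; apply/negP => /andP[/imsetP[n nE ->] /imsetP[y yE]] [e1 e2].
  move: nE yE; rewrite !inEnt => /and3P[_ nZ _] /and3P[_ yZ _].
  have := P2 nZ; have := P2 yZ; rewrite -e1 -e2; lia.
have := cardsUI P Q; rewrite dis cards0 addn0 cP cQ => <-.
apply: subset_leq_card; apply/subsetP => p; rewrite inE incutp => /orP[] /imsetP.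
  case=> n; rewrite inEnt => /and3P[nA nZ fnA] -> /=; rewrite nA fnA /= esym; exact: P1.
case=> y; rewrite inEnt !inE negbK => /and3P[yA yZ fyA] -> /=; rewrite fyA yA; exact: P1.
Qed.

Lemma inTm n : (n \in Tm) = (n \notin Fs).
Proof. by rewrite inE. Qed.

Lemma lemF (A : {set T}) y : y \notin Z -> f y \in A ->
  (forall w, w \notin Z -> f w \in A -> t y <= t w) ->
  3 <= sig A + #|(Nb (f y) :\: A) :\ y|.
Proof.
move=> yZ fyA ymin.
have xlt := P2 yZ.
set x := f y in fyA xlt *.
set ZE := (Z :&: A) :|: Ent A.
have cZE : #|ZE| = sig A.
  rewrite /sig cardsU; suff -> : Z :&: A :&: Ent A = set0 by rewrite cards0 subn0.
  by apply/setP=> n; rewrite !inE; case: (n \in Z); rewrite ?andbF.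
have xZE : x \in ZE.
  rewrite !inE fyA /=; case xZ: (x \in Z) => //=.
  apply/negP => fxA; have := ymin x (negbT xZ) fxA; lia.
have sub : Nb x \subset [set y] :|: (ZE :\ x) :|: ((Nb x :\: A) :\ y).
  apply/subsetP => n; rewrite !inE => exn.
  have [->|ny] := eqVneq n y; first by [].
  rewrite /=.
  case nA: (n \in A); last by rewrite exn orbT.
  have nx : n != x by apply/eqP => nx; rewrite nx eirr in exn.
  rewrite nx /=; case nZ: (n \in Z) => //=.
  apply/orP; left; apply/negP => fnA.
  have := ymin n (negbT nZ) fnA; have := P3 yZ exn ny; lia.
have h := cardsD1 x ZE; rewrite xZE in h.
have := subset_leq_card sub; have := deg3 x; rewrite !cardsU cards1; lia.
Qed.

Lemma lemL (A : {set T}) v : v \in A -> v \notin Z ->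
  (forall w, w \in A -> w \notin Z -> t w <= t v) ->
  3 <= sig A + #|(Nb v :\: A) :\ f v|.
Proof.
move=> vA vZ vmax.
set TX := (Tm :&: A) :|: Ext A.
have cTX : #|TX| = sig A.
  rewrite ident cardsU; suff -> : Tm :&: A :&: Ext A = set0 by rewrite cards0 subn0.
  apply/setP=> n; rewrite !inE ?inTm; apply/negP => /and3P[/andP[/negP nF _] _ /existsP[y /and3P[yZ /eqP fy _]]].
  by apply: nF; apply/imsetP; exists y; rewrite ?inE.
have vTX : v \in TX.
  rewrite !inE ?inTm vA andbT; case: (boolP (v \in Fs)) => //= /imsetP[y2]; rewrite inE => y2Z vfy2.
  have := P2 y2Z; rewrite -vfy2 => lt.
  case y2A: (y2 \in A); first by have := vmax y2 y2A y2Z; lia.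
  by apply/existsP; exists y2; rewrite y2Z -vfy2 eqxx y2A.
have sub : Nb v \subset [set f v] :|: (TX :\ v) :|: ((Nb v :\: A) :\ f v).
  apply/subsetP => n; rewrite !inE => evn.
  have [->|nf] := eqVneq n (f v); first by [].
  rewrite /=.
  case nA: (n \in A); last by rewrite evn orbT.
  have nv : n != v by apply/eqP => nv; rewrite nv eirr in evn.
  rewrite nv /= ?inTm; case: (boolP (n \in Fs)) => //= /imsetP[y2]; rewrite inE => y2Z nfy2.
  rewrite orbF; apply/existsP; exists y2; rewrite y2Z -nfy2 eqxx /=.
  have y2v : v != y2 by apply/eqP => vy2; rewrite nfy2 -vy2 eqxx in nf.
  have env : e (f y2) v by rewrite -nfy2 esym.
  have := P3 y2Z env y2v => lt.
  by apply/negP => y2A; have := vmax y2 y2A y2Z; lia.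
have h := cardsD1 v TX; rewrite vTX in h.
have := subset_leq_card sub; have := deg3 v; rewrite !cardsU cards1; lia.
Qed.

Lemma lemG : (exists w, w \notin Z) -> exists2 x0, x0 \in Z & Z :\ x0 \subset Nb x0.
Proof.
case=> w0 w0Z.
case: (@arg_minnP _ w0 (fun w => w \notin Z) t w0Z) => y yZ ymin.
have fyZ : f y \in Z.
  by apply/negPn/negP => x0Z; have := ymin _ x0Z; have := P2 yZ; lia.
exists (f y) => //.
have sub : Nb (f y) :\ y \subset Z :\ f y.
  apply/subsetP => n; rewrite !inE => /andP[ny exn].
  have -> : n != f y by apply/eqP => nx; rewrite nx eirr in exn.
  by apply/negPn/negP => nZ; have := ymin n nZ; have := P3 yZ exn ny; lia.
have c1 := cardsD1 (f y) Z; rewrite fyZ cardZ in c1.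
have c2 := cardsD1 y (Nb (f y)); have := deg3 (f y).
have yN : y \in Nb (f y) by rewrite inE P1.
rewrite yN in c2 => d3.
have : Nb (f y) :\ y == Z :\ f y by rewrite eqEcard sub /=; lia.
move/eqP => eq; apply/subsetP => n nZ.
have : n \in Nb (f y) :\ y by rewrite eq.
by rewrite inE => /andP[_].
Qed.

Inductive tight (A : {set T}) : Prop :=
  Tight (x y x' v v' : T) of
    x \in A & y \in A & y \notin Z & f y = x &
    x' \notin A & e x x' & t x' < t y & Nb x :\: A = [set x'] &
    v \in A & v \notin Z & (forall w, w \in A -> w \notin Z -> t w <= t v) &
    v' \notin A & e v v' & Nb v :\: A = [set v'] &
    x != v & (forall w b, w \in A -> w != x -> w != v -> b \notin A -> ~~ e w b) &
    Ent A \subset [set x] & Ext A \subset [set v].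

Lemma side (A : {set T}) a : a \in A -> #|cutp A| <= 2 ->
  2 <= sig A /\ (sig A = 2 -> tight A).
Proof.
move=> aA c2.
have A4 := ge4 aA c2.
have hA := cardA A.
case: (boolP [exists w, (w \notin Z) && (f w \in A)]) => noF; last first.
  have I0 : #|Int A| = 0.
    apply/eqP; rewrite cards_eq0; apply/eqP/setP => n; rewrite inInt inE.
    apply/negP => /and3P[_ nZ fnA]; move/negP: noF; apply; apply/existsP; exists n.
    by rewrite nZ fnA.
  split; first by move: hA I0 A4; rewrite /sig; clear; lia.
  by rewrite /sig => s2; exfalso; move: hA I0 A4 s2; clear; lia.
have [w0 /andP[w0Z fw0A]] := existsP noF.
have w0P : (w0 \notin Z) && (f w0 \in A) by rewrite w0Z fw0A.
case: (@arg_minnP _ w0 (fun w => (w \notin Z) && (f w \in A)) t w0P) => y /andP[yZ fyA] ymin.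
have ymin' : forall w, w \notin Z -> f w \in A -> t y <= t w.
  by move=> w wZ fwA; apply: ymin; rewrite wZ fwA.
have hF := lemF yZ fyA ymin'.
have : ~~ (A \subset Z) by apply/negP => /subset_leq_card; rewrite cardZ; move: A4; clear; lia.
case/subsetPn => w1 w1A w1Z.
have w1P : (w1 \in A) && (w1 \notin Z) by rewrite w1A w1Z.
case: (@arg_maxnP _ w1 (fun w => (w \in A) && (w \notin Z)) t w1P) => v /andP[vA vZ] vmax.
have vmax' : forall w, w \in A -> w \notin Z -> t w <= t v.
  by move=> w wA wZ; apply: vmax; rewrite wA wZ.
have hL := lemL vA vZ vmax'.
case: (leqP 3 (sig A)) => [s3|slt]; first by split => [|s2]; [apply: leq_trans s3 | rewrite s2 in s3].
have ty := P2 yZ.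
set x := f y in fyA hF ty *.
have : 0 < #|Int A| by move: hA A4 slt; rewrite /sig; clear; lia.
case/card_gt0P => n; rewrite inInt => /and3P[nA nZ fnA].
have xv : x != v.
  apply/eqP => xv; have h1 := ymin' n nZ fnA; have h2 := vmax' n nA nZ; rewrite xv in ty.
  by move: ty h1 h2; clear; lia.
have ccxv := cc2 fyA vA xv.
have l1 : #|(Nb x :\: A) :\ y| <= cc A x by apply: subset_leq_card; apply: subD1set.
have l2 : #|(Nb v :\: A) :\ f v| <= cc A v by apply: subset_leq_card; apply: subD1set.
have sig2 : sig A = 2 by move: hF hL ccxv l1 l2 slt c2; clear; lia.
split; first by rewrite sig2.
move=> _.
have ccx1 : cc A x = 1 by move: hF hL ccxv l1 l2 sig2 c2; clear; lia.
have ccv1 : cc A v = 1 by move: hF hL ccxv l1 l2 sig2 c2; clear; lia.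
have dx : #|(Nb x :\: A) :\ y| = #|Nb x :\: A| by rewrite -/(cc A x); move: ccx1 l1 hF sig2; clear; lia.
have dv : #|(Nb v :\: A) :\ f v| = #|Nb v :\: A| by rewrite -/(cc A v); move: ccv1 l2 hL sig2; clear; lia.
have yA : y \in A.
  have h := cardsD1 y (Nb x :\: A); rewrite dx in h.
  have : (y \in Nb x :\: A) = false by move: h; case: (y \in _) => //= h; exfalso; move: h; clear; lia.
  by rewrite !inE P1 // andbT => /negbFE.
have fvA : f v \in A.
  have h := cardsD1 (f v) (Nb v :\: A); rewrite dv in h.
  have : (f v \in Nb v :\: A) = false by move: h; case: (_ \in _) => //= h; exfalso; move: h; clear; lia.
  by rewrite !inE esym P1 // andbT => /negbFE.
have : #|Nb x :\: A| == 1 by rewrite -/(cc A x) ccx1.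
case/cards1P => x' Hx'.
have : x' \in Nb x :\: A by rewrite Hx' set11.
rewrite !inE => /andP[x'A exx'].
have x'y : x' != y by apply/eqP => x'y; rewrite x'y yA in x'A.
have tx' := P3 yZ exx' x'y.
have : #|Nb v :\: A| == 1 by rewrite -/(cc A v) ccv1.
case/cards1P => v' Hv'.
have : v' \in Nb v :\: A by rewrite Hv' set11.
rewrite !inE => /andP[v'A evv'].
have others : forall w b, w \in A -> w != x -> w != v -> b \notin A -> ~~ e w b.
  move=> w b wA wx wv bA; apply/negP => ewb.
  have h3 := cc3 fyA vA wA xv (_ : x != w) (_ : v != w); rewrite eq_sym wx eq_sym wv in h3.
  have h4 := h3 erefl erefl.
  have h5 : 0 < cc A w by apply/card_gt0P; exists b; rewrite !inE bA ewb.
  by move: h4 h5 ccx1 ccv1 c2; clear; lia.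
have entx : Ent A \subset [set x].
  apply/subsetP => m; rewrite inEnt => /and3P[mA mZ fmA]; rewrite inE.
  case: (eqVneq m x) => // mx; case: (eqVneq m v) => [mv | mv].
    by rewrite mv fvA in fmA.
  by have := others m (f m) mA mx mv fmA; rewrite esym P1.
have extv : Ext A \subset [set v].
  apply/subsetP => m; rewrite inExt => /andP[mA /existsP[y2 /and3P[y2Z /eqP fy2 y2A]]]; rewrite inE.
  case: (eqVneq m v) => // mv; case: (eqVneq m x) => [mx | mx].
    have y2y : y2 = y by apply: finj; rewrite ?inE // fy2 mx.
    by rewrite y2y yA in y2A.
  by have := others m y2 mA mx mv y2A; rewrite -fy2 P1.
exact: (Tight fyA yA yZ erefl x'A exx' tx' Hx' vA vZ vmax' v'A evv' Hv' xv others entx extv).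
Qed.

Lemma caseA (A : {set T}) a b : a \in A -> b \notin A -> #|cutp A| <= 2 ->
  #|cutp (~: A)| <= 2 -> sig A = 2 -> False.
Proof.
move=> aA bA cA cB sA.
have bB : b \in ~: A by rewrite inE.
have [sB2 tB] := side bB cB.
have [_ tA] := side aA cA.
case: (tA sA) => x y x' v v' xA yA yZ fyx x'A exx' tx'y Hx' vA vZ vmax v'A evv' Hv' xv oth entA extA.
have zsum : #|Z :&: A| + #|Z :&: ~: A| = 3 by rewrite -cardZ -(cardsID A Z) setDE.
have ceA : #|Ent A| <= 1 by rewrite -(cards1 x); apply: subset_leq_card.
have ceB : #|Ent (~: A)| <= 1 by rewrite -cardExt -(cards1 v); apply: subset_leq_card.
have sBe : sig (~: A) = 1 + #|Ent A| + #|Ent (~: A)| by move: sA zsum; rewrite /sig; clear; lia.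
have inNx : forall w, w \notin A -> e x w -> w = x'.
  by move=> w wA exw; apply/set1P; rewrite -Hx' !inE wA exw.
have inNv : forall w, w \notin A -> e v w -> w = v'.
  by move=> w wA evw; apply/set1P; rewrite -Hv' !inE wA evw.
have cross : forall w2 w2', w2 \notin A -> w2' \in A -> e w2' w2 ->
    (w2' = x /\ w2 = x') \/ (w2' = v /\ w2 = v').
  move=> w2 w2' w2A w2'A e2.
  case: (eqVneq w2' x) => [ex|w2x].
    by left; split => //; apply: inNx => //; rewrite -ex.
  case: (eqVneq w2' v) => [ev|w2v].
    by right; split => //; apply: inNv => //; rewrite -ev.
  by move: (oth w2' w2 w2'A w2x w2v w2A); rewrite e2.
have hA01 : #|Ent A| = 0 \/ #|Ent A| = 1 by move: ceA; clear; lia.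
have hB01 : #|Ent (~: A)| = 0 \/ #|Ent (~: A)| = 1 by move: ceB; clear; lia.
case: hA01 => eA; case: hB01 => eB.
- by rewrite sBe eA eB in sB2.
-
  have : Ext A == [set v] by rewrite eqEcard extA cards1 cardExt eB.
  move/eqP => Ev; have : v \in Ext A by rewrite Ev set11.
  rewrite inExt => /andP[_ /existsP[y3 /and3P[y3Z /eqP fy3 y3A]]].
  have ev3 : e v y3 by rewrite -fy3 P1.
  have y3v' := inNv y3 y3A ev3; subst y3.
  case: (tB _) => [|x2 y2 x2' v2 v2' x2B y2B y2Z fy2 x2'B ex2 tx2' Hx2' v2B v2Z v2max v2'B ev2 Hv2' x2v2 _ entB extB].
    by rewrite sBe eA eB.
  have v'E : v' \in Ent (~: A) by rewrite inEnt !inE v'A y3Z fy3 vA.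
  have v'x2 : v' = x2 by apply/set1P; move/subsetP: entB; apply.
  have v2'A : v2' \in A by move: v2'B; rewrite inE negbK.
  have v2A : v2 \notin A by move: v2B; rewrite inE.
  case: (cross v2 v2' v2A v2'A _) => [|[_ v2x']|[_ v2v']]; first by rewrite esym.
    have t1 := vmax y yA yZ.
    have t2 := P2 y3Z; rewrite fy3 in t2.
    have t3 := P2 y2Z; rewrite fy2 -v'x2 in t3.
    have t4 := v2max y2 y2B y2Z; rewrite v2x' in t4.
    by move: tx'y t1 t2 t3 t4; clear; lia.
  by rewrite v2v' v'x2 eqxx in x2v2.
-
  have : Ent A == [set x] by rewrite eqEcard entA cards1 eA.
  move/eqP => Ex; have : x \in Ent A by rewrite Ex set11.
  rewrite inEnt => /and3P[_ xZ fxA].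
  have efx : e x (f x) by rewrite esym P1.
  have fxx' := inNx (f x) fxA efx.
  case: (tB _) => [|x2 y2 x2' v2 v2' x2B y2B y2Z fy2 x2'B ex2 tx2' Hx2' v2B v2Z v2max v2'B ev2 Hv2' x2v2 _ entB extB].
    by rewrite sBe eA eB.
  have x'X : x' \in Ext (~: A).
    by rewrite inExt inE x'A /=; apply/existsP; exists x; rewrite xZ fxx' eqxx !inE negbK xA.
  have x'v2 : x' = v2 by apply/set1P; move/subsetP: extB; apply.
  have x2'A : x2' \in A by move: x2'B; rewrite inE negbK.
  have x2A : x2 \notin A by move: x2B; rewrite inE.
  case: (cross x2 x2' x2A x2'A _) => [|[_ x2x']|[x2'v _]]; first by rewrite esym.
    by rewrite x2x' x'v2 eqxx in x2v2.
  have t1 := vmax y yA yZ.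
  have t2 := P2 xZ; rewrite fxx' in t2.
  have t3 := P2 yZ; rewrite fyx in t3.
  have t4 := v2max y2 y2B y2Z; rewrite -x'v2 in t4.
  rewrite x2'v in tx2'.
  by move: tx2' t1 t2 t3 t4; clear; lia.
-
  have : Ent A == [set x] by rewrite eqEcard entA cards1 eA.
  move/eqP => Ex; have : x \in Ent A by rewrite Ex set11.
  rewrite inEnt => /and3P[_ xZ _].
  have : #|Z :&: A| == 1 by move: sA; rewrite /sig eA; clear; lia.
  case/cards1P => z Ez.
  have : z \in Z :&: A by rewrite Ez set11.
  rewrite inE => /andP[zZ zA].
  have zx : z != x by apply/eqP => zx; rewrite zx (negbTE xZ) in zZ.
  have zv : z != v by apply/eqP => zv; rewrite zv (negbTE vZ) in zZ.
  have [x0 x0Z sub] := lemG (ex_intro _ v vZ).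
  case x0A: (x0 \in A).
    have : x0 \in Z :&: A by rewrite inE x0Z x0A.
    rewrite Ez => /set1P x0z; subst x0.
    have : 0 < #|Z :&: ~: A| by move: zsum eA sA; rewrite /sig; clear; lia.
    case/card_gt0P => b0; rewrite !inE => /andP[b0Z b0A].
    have : b0 \in Z :\ z by rewrite !inE b0Z andbT; apply/eqP => b0z; rewrite b0z zA in b0A.
    move/(subsetP sub); rewrite inE => ezb0.
    by move: (oth z b0 zA zx zv b0A); rewrite ezb0.
  have : z \in Z :\ x0 by rewrite !inE zZ andbT; apply/eqP => zx0; rewrite -zx0 zA in x0A.
  move/(subsetP sub); rewrite inE => ex0z.
  by move: (oth z x0 zA zx zv (negbT x0A)); rewrite esym ex0z.
Qed.

Lemma core (S : {set T}) s s' : s \in S -> s' \notin S -> #|cutp S| <= 2 -> False.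
Proof.
move=> sS s'S cS.
have cB : #|cutp (~: S)| <= 2.
  apply: leq_trans cS; apply: leq_trans (leq_imset_card (fun p : T * T => (p.2, p.1)) _).
  apply: subset_leq_card; apply/subsetP => p; rewrite incutp !inE negbK => /and3P[p1 p2 ep].
  apply/imsetP; exists (p.2, p.1); last by case: p {p1 p2 ep}.
  by rewrite incutp /= p2 p1 esym.
have s'B : s' \in ~: S by rewrite inE.
have [sS2 _] := side sS cS.
have [sB2 _] := side s'B cB.
case: (eqVneq (sig S) 2) => [e2|ne2]; first exact: (caseA sS s'S cS cB e2).
case: (eqVneq (sig (~: S)) 2) => [e2|ne2'].
  apply: (caseA (A := ~: S) (a := s') (b := s)) => //; first by rewrite inE negbK.
  by rewrite setCK.
have zsum : #|Z :&: S| + #|Z :&: ~: S| = 3 by rewrite -cardZ -(cardsID S Z) setDE.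
have cr := crossing S.
move: sS2 sB2 ne2 ne2' zsum cr cS; rewrite /sig; clear; lia.
Qed.

End Core.

Lemma fs_sub (T : finType) (e : rel T) (B : {set T}) : B \subset force_step e B.
Proof. exact: subsetUl. Qed.

Lemma iter_mono (T : finType) (e : rel T) (Z : {set T}) m n : m <= n ->
  iter m (force_step e) Z \subset iter n (force_step e) Z.
Proof.
move=> /subnK <-; elim: (n - m) => [|k IH]; first by rewrite add0n.
rewrite addSn /=; apply: subset_trans IH (fs_sub _ _).
Qed.

Lemma iter_setT (T : finType) (e : rel T) n : iter n (force_step e) [set: T] = [set: T].
Proof. by elim: n => //= n ->; rewrite /force_step setTU. Qed.

Unset Implicit Arguments.

Theorem mainTheorem1 (T : finType) (e : rel T) :
  simple_graph e -> connected_graph e -> min_deg_ge e 3 ->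
  zero_forcing_number e = 3 -> 3 <= edge_connectivity e.
Proof.
move=> [esym eirr] _ deg.
have ZT : zero_forcing_set e [set: T] by rewrite /zero_forcing_set /zf_closure iter_setT.
rewrite /zero_forcing_number.
case: (@arg_minnP _ [set: T] (fun Z => zero_forcing_set e Z) (fun Z => #|Z|) ZT) => Z0 zfZ0 _ cZ0.
pose B n := iter n (force_step e) Z0.
have full : B #|T| = [set: T] by apply/eqP.
have exB : forall v, exists n, v \in B n by move=> v; exists #|T|; rewrite full inE.
pose t v := ex_minn (exB v).
have tP : forall v, v \in B (t v) by move=> v; rewrite /t; case: ex_minnP.
have tmin : forall v n, v \in B n -> t v <= n by move=> v n; rewrite /t; case: ex_minnP => m _; apply.
have memB : forall v n, t v <= n -> v \in B n.
  by move=> v n le; apply: (subsetP (iter_mono e Z0 le)); apply: tP.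
pose ok v u := [&& u \in B (t v).-1, e u v & (neighbours e u :\: B (t v).-1 == [set v])].
pose f v := if [pick u | ok v u] is Some u then u else v.
have fP : forall v, v \notin Z0 -> ok v (f v).
  move=> v vZ; rewrite /f; case: pickP => [u // | none]; exfalso.
  have tv0 : t v != 0 by apply: contra vZ => /eqP t0; have := tP v; rewrite t0.
  have := tP v; rewrite -(prednK (n := t v)) ?lt0n //= {1}/force_step !inE => /orP[vB|].
    by have := tmin _ _ vB; move: tv0; clear; lia.
  case/existsP => u /and4P[uB euv _ Nu]; have := none u; rewrite /ok uB euv Nu.
  done.
have tpos : forall v, v \notin Z0 -> 0 < t v.
  by move=> v vZ; rewrite lt0n; apply: contra vZ => /eqP t0; have := tP v; rewrite t0.
have P1 : forall v, v \notin Z0 -> e (f v) v by move=> v /fP /and3P[].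
have P2 : forall v, v \notin Z0 -> t (f v) < t v.
  move=> v vZ; have /and3P[fB _ _] := fP v vZ; have := tmin _ _ fB; have := tpos v vZ.
  by clear; lia.
have P3 : forall v n, v \notin Z0 -> e (f v) n -> n != v -> t n < t v.
  move=> v n vZ en nv; have /and3P[_ _ /eqP HN] := fP v vZ.
  have nB : n \in B (t v).-1.
    apply/negPn/negP => nB; have : n \in neighbours e (f v) :\: B (t v).-1 by rewrite !inE nB en.
    by rewrite HN inE (negbTE nv).
  have := tmin _ _ nB; have := tpos v vZ; by clear; lia.
have deg3 : forall v, 3 <= #|neighbours e v| by exact: deg.
rewrite /edge_connectivity; apply: (big_ind (fun n => 3 <= n)).
- have : 0 < #|Z0| by rewrite cZ0.
  case/card_gt0P => v0 _.
  apply: leq_trans (deg3 v0) _.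
  have -> : #|neighbours e v0| = #|[set [set v0; u] | u in neighbours e v0]|.
    symmetry; apply: card_in_imset => u u' uN u'N /= eq.
    have : u \in [set v0; u'] by rewrite -eq !inE eqxx orbT.
    rewrite !inE => /orP[/eqP uv0|/eqP //].
    by move: uN; rewrite inE uv0 eirr.
  apply: subset_leq_card; apply/subsetP => E /imsetP[u uN ->].
  by rewrite /edge_set inE; apply/existsP; exists v0; apply/existsP; exists u; rewrite eqxx andbT; move: uN; rewrite inE.
- by move=> m n hm hn; rewrite leq_min hm hn.
move=> F /andP[_ /existsP[x /existsP[y nc]]].
rewrite leqNgt; apply/negP => F2.
pose S := [set z | connect (delete_edges e F) x z].
have xS : x \in S by rewrite inE connect0.
have yS : y \notin S by rewrite inE.
apply: (core esym eirr deg3 P1 P2 P3 cZ0 xS yS).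
apply: leq_trans (_ : #|F| <= 2); last by move: F2; clear; lia.
have -> : #|cutp e S| = #|[set [set p.1; p.2] | p in cutp e S]|.
  symmetry; apply: card_in_imset.
  move=> [a b] [a' b']; rewrite !incutp /= => /and3P[aS bS _] /and3P[a'S b'S _] eq.
  have : a \in [set a'; b'] by rewrite -eq !inE eqxx.
  rewrite !inE => /orP[/eqP aa'|/eqP ab']; last by rewrite ab' (negbTE b'S) in aS.
  have : b \in [set a'; b'] by rewrite -eq !inE eqxx orbT.
  rewrite !inE => /orP[/eqP ba'|/eqP -> ]; last by rewrite aa'.
  by rewrite ba' a'S in bS.
apply: subset_leq_card; apply/subsetP => E /imsetP[[a b]]; rewrite incutp /= => /and3P[aS bS eab] ->.
apply/negPn/negP => nF; case/negP: bS; rewrite inE.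
apply: connect_trans (_ : connect _ a b); first by move: aS; rewrite inE.
by apply: connect1; rewrite /delete_edges eab nF.
Qed.
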